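(* For $i=1,\dots,d$ let $\omega_i\subseteq\mathbb{R}$ be a nonempty open interval and $f_i:\omega_i\to\mathbb{R}$ a univariate function of Legendre type; let $\Omega=\prod_{i=1}^d\omega_i$ and $F(x)=\sum_{i=1}^d f_i(x_i)$ on $\Omega$, with Bregman divergence $D_F$. Let $P=\{x\in\mathbb{R}^d: x_j=c\}$ be an axis-aligned hyperplane (for some $j\in\{1,\dots,d\}$, $c\in\mathbb{R}$) with $P\cap\Omega\neq\emptyset$, and let $q\in\Omega$. Then the orthogonal projection $q_P=(q_1,\dots,q_{j-1},c,q_{j+1},\dots,q_d)$ of $q$ onto $P$ lies in $P\cap\Omega$ and is the unique minimizer over $p\in P\cap\Omega$ of $D_F(q\|p)$, and also the unique minimizer over $p\in P\cap\Omega$ of $D_F(p\|q)$; i.e. the Bregman projection of $q$ onto $P$, computed in either direction, coincides with the orthogonal projection.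
   Context: A function $G:U\to\mathbb{R}$ on a nonempty open convex set $U$ is of Legendre type if it is differentiable, strictly convex, and, if $\partial U\neq\emptyset$, $\|\nabla G(x)\|\to\infty$ as $x\to\partial U$. The Bregman divergence generated by $G$ is $D_G(x\|y)=G(x)-G(y)-\langle\nabla G(y),x-y\rangle$. For $F=\sum_i f_i(x_i)$ one has $D_F(x\|y)=\sum_i D_{f_i}(x_i\|y_i)$. *)

(* Defs.v *)
From HB Require Import structures.
From mathcomp Require Import all_boot all_order all_algebra.
From mathcomp Require Import all_classical all_reals all_analysis.
Set Implicit Arguments. Unset Strict Implicit. Unset Printing Implicit Defensive.
Import Order.TTheory GRing.Theory Num.Theory.
Import numFieldNormedType.Exports.
Local Open Scope classical_set_scope.
Local Open Scope ring_scope.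

Definition in_oint {R : realType} (a b : \bar R) (x : R) : Prop :=
  (a < x%:E)%E /\ (x%:E < b)%E.

Definition legendre1 {R : realType} (a b : \bar R) (f : R -> R) : Prop :=
  [/\ (a < b)%E,
      (forall x, in_oint a b x -> derivable f x 1),
      (forall x y t, in_oint a b x -> in_oint a b y -> x <> y ->
          0 < t < 1 -> f (t * x + (1 - t) * y) < t * f x + (1 - t) * f y),
      (forall a0 : R, a = a0%:E -> `|derive1 f x| @[x --> a0^'+] --> +oo)
    & (forall b0 : R, b = b0%:E -> `|derive1 f x| @[x --> b0^'-] --> +oo)].

Definition in_box {R : realType} {d : nat} (a b : 'I_d -> \bar R)
  (x : 'I_d -> R) : Prop := forall i, in_oint (a i) (b i) (x i).

Definition sepF {R : realType} {d : nat} (f : 'I_d -> R -> R)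
  (x : 'I_d -> R) : R := \sum_(i < d) f i (x i).

Definition bregman {R : realType} {d : nat} (f : 'I_d -> R -> R)
  (x y : 'I_d -> R) : R :=
  sepF f x - sepF f y - \sum_(i < d) derive1 (f i) (y i) * (x i - y i).

Definition ortho_proj {R : realType} {d : nat} (j : 'I_d) (c : R)
  (q : 'I_d -> R) : 'I_d -> R := fun i => if i == j then c else q i.

(* Main.v *)
Require Import Defs.
From HB Require Import structures.
From mathcomp Require Import all_boot all_order all_algebra.
From mathcomp Require Import all_classical all_reals all_analysis.
From mathcomp Require Import ring lra.
Import Order.TTheory GRing.Theory Num.Theory.
Import numFieldNormedType.Exports.
Local Open Scope classical_set_scope.
Local Open Scope ring_scope.

Lemma oint_conv {R : realType} (a b : \bar R) x y u :
  in_oint a b x -> in_oint a b y -> 0 < u < 1 -> in_oint a b (u * x + (1 - u) * y).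
Proof.
move=> [ax xb] [ay yb] /andP[u0 u1]; split.
  case: a ax ay => [a0| |] //=.
    rewrite !lte_fin => ax ay; nra.
  by move=> _ _; rewrite ltNyr.
case: b xb yb => [b0| |] //=.
  rewrite !lte_fin => bx b_y; nra.
by move=> _ _; rewrite ltry.
Qed.

Lemma breg_ge {R : realType} (a b : \bar R) (f : R -> R) x y :
  legendre1 a b f -> in_oint a b x -> in_oint a b y -> x <> y ->
  derive1 f y * (x - y) <= f x - f y.
Proof.
move=> [ab hd hc _ _] ix iy xy.
have d1 := hd _ iy.
have dfy : differentiable f y by apply/derivable1_diffP.
set s := x - y.
have ds : derivable f y s by apply: diff_derivable.
have -> : derive1 f y * s = 'D_s f y.
  by rewrite deriveE // deriv1E //= mulrC.
have cv : (fun h => h^-1 *: ((f \o shift y) (h *: s) - f y)) @ 0^' --> 'D_s f y by [].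
have cvr : (fun h => h^-1 *: ((f \o shift y) (h *: s) - f y)) @ 0^'+ --> 'D_s f y.
  move=> A /cv /nbhs_ballP [_ /posnumP[e] xe_A].
  by exists e%:num => //= z ze; rewrite lt_def => /andP [zne _]; apply: xe_A.
apply: (cvgr_to_le cvr).
near=> t.
have t0 : 0 < t by near: t; exact: nbhs_right_gt.
have t1 : t < 1 by near: t; exact: nbhs_right_lt.
have := hc x y t ix iy xy; rewrite t0 t1 => /(_ isT) h.
rewrite /= /s -ler_pdivlMl // ?invr_gt0 // invrK.
have -> : t *: (x - y) + y = t * x + (1 - t) * y by rewrite /GRing.scale /=; ring.
nra.
Unshelve. all: by end_near.
Qed.

Arguments oint_conv {R a b x y u}.
Arguments breg_ge {R a b f x y}.

Lemma breg_gt {R : realType} (a b : \bar R) (f : R -> R) x y :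
  legendre1 a b f -> in_oint a b x -> in_oint a b y -> x <> y ->
  0 < f x - f y - derive1 f y * (x - y).
Proof.
move=> L ix iy xy.
have h12 : 0 < (1 / 2 : R) < 1.
  apply/andP; split; lra.
have im := oint_conv ix iy h12.
have my : 1 / 2 * x + (1 - 1 / 2) * y <> y.
  move=> e; apply: xy; lra.
have := breg_ge L im iy my.
case: L => _ _ hc _ _.
have := hc x y (1 / 2) ix iy xy h12.
have -> : derive1 f y * (1 / 2 * x + (1 - 1 / 2) * y - y) = derive1 f y * (x - y) / 2.
  by field.
lra.
Qed.

Arguments breg_gt {R a b f x y}.

Lemma breg_ge0 {R : realType} (a b : \bar R) (f : R -> R) x y :
  legendre1 a b f -> in_oint a b x -> in_oint a b y ->
  0 <= f x - f y - derive1 f y * (x - y).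
Proof.
move=> L ix iy; have [->|xy] := eqVneq x y.
  by rewrite !subrr mulr0 subr0.
by apply/ltW/(breg_gt L ix iy); apply/eqP.
Qed.

Arguments breg_ge0 {R a b f x y}.

Lemma bregmanE {R : realType} (d : nat) (f : 'I_d -> R -> R) x y :
  bregman f x y = \sum_(i < d) (f i (x i) - f i (y i) - derive1 (f i) (y i) * (x i - y i)).
Proof. by rewrite /bregman /sepF -!sumrB. Qed.

Lemma sum_lt {R : realType} (d : nat) (g h : 'I_d -> R) :
  (forall i, g i <= h i) -> (exists i, g i < h i) -> \sum_(i < d) g i < \sum_(i < d) h i.
Proof.
move=> le [i lt]; rewrite (bigD1 i) //= [X in _ < X](bigD1 i) //=.
by apply: ltr_leD => //; apply: ler_sum => k _.
Qed.

Theorem lemma5 (R : realType) (d : nat) (a b : 'I_d -> \bar R)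
  (f : 'I_d -> R -> R) (j : 'I_d) (c : R) (q : 'I_d -> R) :
  (forall i, legendre1 (a i) (b i) (f i)) ->
  (exists p : 'I_d -> R, p j = c /\ in_box a b p) ->
  in_box a b q ->
  let qP := ortho_proj j c q in
  [/\ qP j = c, in_box a b qP,
      (forall p, p j = c -> in_box a b p -> p <> qP ->
         bregman f q qP < bregman f q p)
    & (forall p, p j = c -> in_box a b p -> p <> qP ->
         bregman f qP q < bregman f p q)].
Proof.
move=> L [p0 [p0j bp0]] bq qP.
have qPj : qP j = c by rewrite /qP /ortho_proj eqxx.
have qPi : forall i, i != j -> qP i = q i.
  by move=> i /negbTE ij; rewrite /qP /ortho_proj ij.
have bqP : in_box a b qP.
  move=> i; have [->|ij] := eqVneq i j; first by rewrite qPj -p0j.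
  by rewrite qPi.
have ex : forall p, p <> qP -> exists i, p i <> qP i.
  move=> p pq; apply/existsNP => h; apply: pq; apply/funext => i.
  exact: h.
split => // p pj bp pq; rewrite !bregmanE; apply: sum_lt.
- move=> i; have [->|ij] := eqVneq i j; first by rewrite qPj pj.
  rewrite qPi // !subrr mulr0 subr0; exact: breg_ge0.
- have [i hi] := ex p pq; exists i.
  have ij : i != j by apply/eqP => e; apply: hi; rewrite e pj qPj.
  rewrite qPi // !subrr mulr0 subr0; apply: (breg_gt (L i)) => //.
  by move=> e; apply: hi; rewrite qPi.
- move=> i; have [->|ij] := eqVneq i j; first by rewrite qPj pj.
  rewrite qPi // !subrr mulr0 subr0; exact: breg_ge0.
- have [i hi] := ex p pq; exists i.
  have ij : i != j by apply/eqP => e; apply: hi; rewrite e pj qPj.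
  rewrite qPi // !subrr mulr0 subr0; apply: (breg_gt (L i)) => //.
  by rewrite -(qPi i ij).
Qed.
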